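(* Let $f\in\mathcal R^0_{[1]}(\mathbb R^2)$ and $v\in\mathbb R^2$. Then the partial derivative $\partial_v f$ (a regular function on $\mathrm{dom}(f)$) is locally bounded at every point of $\mathrm{pol}(f)$: for each $a\in\mathrm{pol}(f)$ there is a neighbourhood $U$ of $a$ such that $\partial_v f$ is bounded on $U\cap\mathrm{dom}(f)$.
   Context: For $k\in\mathbb N\cup\{\infty\}$, $\mathcal R^k(\mathbb R^2)$ denotes the ring of functions $f:\mathbb R^2\to\mathbb R$ of class $C^k$ that coincide with $p/q$ ($p,q$ polynomials, $q$ nonvanishing there) on some nonempty Zariski open set; $\mathrm{dom}(f)$ is the largest Zariski open set on which the associated rational function is regular and $\mathrm{pol}(f)=\mathbb R^2\setminus\mathrm{dom}(f)$. For $l\in\mathbb N$: consider compositions $\pi:M\to\mathbb R^2$ of successive blowings-up $M_i\to M_{i-1}$ ($M_0=\mathbb R^2$), each centred at points. An infinitely near point of order $j$ is a sequence $a_0\in M_0,\dots,a_j\in M_j$ where $M_i$ is the blowing-up of $M_{i-1}$ at $a_{i-1}$ and $a_i$ maps to $a_{i-1}$; the number of stages of $\pi$ is the maximal order of infinitely near points in $M$. $\mathcal R^k_{[l]}(\mathbb R^2)$ is the set of $f\in\mathcal R^k(\mathbb R^2)$ for which there is such a $\pi$ with at most $l$ stages such that $f\circ\pi$ is regular on $M$. *)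

(* Defs.v *)
From Stdlib Require Import Reals List.
Open Scope R_scope.

Definition pt := (R * R)%type.

(* Polynomials in two variables: p = [r_0; r_1; ...], r_i = [c_i0; c_i1; ...]
   represents sum_{i,j} c_ij x^i y^j. *)
Definition poly2 := list (list R).

Fixpoint eval1 (l : list R) (y : R) : R :=
  match l with nil => 0 | c :: l' => c + y * eval1 l' y end.

Fixpoint peval (p : poly2) (z : pt) : R :=
  match p with
  | nil => 0
  | r :: p' => eval1 r (snd z) + fst z * peval p' z
  end.

(* Zariski open subsets of R^2: complements of common zero sets of
   finitely many polynomials. *)
Definition zopen (U : pt -> Prop) : Prop :=
  exists ps : list poly2, forall z, U z <-> exists p, In p ps /\ peval p z <> 0.

Definition dist2 (z w : pt) : R :=
  sqrt ((fst z - fst w)^2 + (snd z - snd w)^2).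

Definition continuous2 (f : pt -> R) : Prop :=
  forall z eps, 0 < eps -> exists delta, 0 < delta /\
    forall w, dist2 w z < delta -> Rabs (f w - f z) < eps.

Definition is_rational (f : pt -> R) : Prop :=
  exists (p q : poly2) (U : pt -> Prop), zopen U /\ (exists z, U z) /\
    forall z, U z -> peval q z <> 0 /\ f z = peval p z / peval q z.

Definition R0 (f : pt -> R) : Prop := continuous2 f /\ is_rational f.

(* The rational function associated with f is regular at z: it admits a
   representative p/q (i.e. p/q = f on a nonempty Zariski open set) with q(z) <> 0. *)
Definition rat_regular_at (f : pt -> R) (z : pt) : Prop :=
  exists p q : poly2, peval q z <> 0 /\
    exists U : pt -> Prop, zopen U /\ (exists w, U w) /\
      forall w, U w -> peval q w <> 0 /\ f w = peval p w / peval q w.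

Definition dom (f : pt -> R) (z : pt) : Prop := rat_regular_at f z.
Definition pol (f : pt -> R) (z : pt) : Prop := ~ dom f z.

Definition regular_at (g : pt -> R) (z : pt) : Prop :=
  exists (p q : poly2) (U : pt -> Prop), zopen U /\ U z /\
    forall w, U w -> peval q w <> 0 /\ g w = peval p w / peval q w.

(* The two affine charts of the blowing-up of R^2 at a; in both charts the
   exceptional divisor is given by the vanishing of one coordinate. *)
Definition chart1 (a : pt) (z : pt) : pt := (fst a + fst z, snd a + fst z * snd z).
Definition chart2 (a : pt) (z : pt) : pt := (fst a + fst z * snd z, snd a + snd z).

(* f o pi is regular on M, where pi : M -> R^2 is the blowing-up of R^2 at
   the finite set of points S (a one-stage composition of point blowings-up). *)
Definition regular_after_blowup (S : list pt) (f : pt -> R) : Prop :=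
  (forall z, ~ In z S -> regular_at f z) /\
  (forall a, In a S ->
     (forall w : R, regular_at (fun z => f (chart1 a z)) (0, w)) /\
     (forall u : R, regular_at (fun z => f (chart2 a z)) (u, 0))).

Definition R0_1 (f : pt -> R) : Prop :=
  R0 f /\ exists S : list pt, regular_after_blowup S f.

Definition line (f : pt -> R) (z v : pt) : R -> R :=
  fun t => f (fst z + t * fst v, snd z + t * snd v).

(* Main.v *)
Require Import Defs.
From Stdlib Require Import Reals List Lra Classical ClassicalEpsilon.
From Coquelicot Require Import Compactness.
Open Scope R_scope.

Definition box (K : R) (z : pt) := Rabs (fst z) <= K /\ Rabs (snd z) <= K.
Definition nice (h : pt -> R) := forall K, exists B L, 0 <= B /\ 0 <= L /\
  forall z z', box K z -> box K z' -> Rabs (h z) <= B /\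
    Rabs (h z - h z') <= L * (Rabs (fst z - fst z') + Rabs (snd z - snd z')).

Lemma nice_ext h h' : (forall z, h z = h' z) -> nice h -> nice h'.
Proof. intros E H K; destruct (H K) as [B [L [? [? HH]]]]; exists B, L; split; [|split]; auto.
  intros z z' Hz Hz'; rewrite <- !E; auto. Qed.

Lemma nice_const c : nice (fun _ => c).
Proof. intros K; exists (Rabs c), 0; split; [apply Rabs_pos|split; [lra|]].
  intros; split; [lra|]. unfold Rminus; rewrite Rplus_opp_r, Rabs_R0.
  pose proof (Rabs_pos (fst z - fst z')); pose proof (Rabs_pos (snd z - snd z')); nra. Qed.

Lemma nice_fst : nice fst.
Proof. intros K; exists (Rabs K), 1; split; [apply Rabs_pos|split; [lra|]].
  intros z z' [H1 H2] _; split. eapply Rle_trans; [exact H1| apply RRle_abs].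
  pose proof (Rabs_pos (snd z - snd z')); lra. Qed.

Lemma nice_snd : nice snd.
Proof. intros K; exists (Rabs K), 1; split; [apply Rabs_pos|split; [lra|]].
  intros z z' [H1 H2] _; split. eapply Rle_trans; [exact H2| apply RRle_abs].
  pose proof (Rabs_pos (fst z - fst z')); lra. Qed.

Lemma nice_plus h1 h2 : nice h1 -> nice h2 -> nice (fun z => h1 z + h2 z).
Proof. intros H1 H2 K; destruct (H1 K) as [B1 [L1 [? [? G1]]]]; destruct (H2 K) as [B2 [L2 [? [? G2]]]].
  exists (B1+B2), (L1+L2); split; [lra|split; [lra|]].
  intros z z' Hz Hz'; destruct (G1 z z' Hz Hz'); destruct (G2 z z' Hz Hz'); split.
  eapply Rle_trans; [apply Rabs_triang|lra].
  replace (h1 z + h2 z - (h1 z' + h2 z')) with ((h1 z - h1 z') + (h2 z - h2 z')) by ring.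
  eapply Rle_trans; [apply Rabs_triang|lra]. Qed.

Lemma nice_opp h : nice h -> nice (fun z => - h z).
Proof. intros H K; destruct (H K) as [B [L [? [? G]]]]; exists B, L; split; [lra|split; [lra|]].
  intros z z' Hz Hz'; destruct (G z z' Hz Hz'); split. rewrite Rabs_Ropp; auto.
  replace (- h z - - h z') with (- (h z - h z')) by ring; rewrite Rabs_Ropp; auto. Qed.

Lemma nice_mult h1 h2 : nice h1 -> nice h2 -> nice (fun z => h1 z * h2 z).
Proof. intros H1 H2 K; destruct (H1 K) as [B1 [L1 [? [? G1]]]]; destruct (H2 K) as [B2 [L2 [? [? G2]]]].
  exists (B1*B2), (B1*L2+B2*L1); split; [nra|split; [nra|]].
  intros z z' Hz Hz'; destruct (G1 z z' Hz Hz') as [a1 b1]; destruct (G2 z z' Hz Hz') as [a2 b2];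
  destruct (G2 z' z Hz' Hz) as [a2' _]; split.
  rewrite Rabs_mult; apply Rmult_le_compat; auto; apply Rabs_pos.
  replace (h1 z * h2 z - h1 z' * h2 z') with (h1 z * (h2 z - h2 z') + h2 z' * (h1 z - h1 z')) by ring.
  eapply Rle_trans; [apply Rabs_triang|]. rewrite !Rabs_mult.
  set (d := Rabs (fst z - fst z') + Rabs (snd z - snd z')).
  assert (Rabs (h1 z) * Rabs (h2 z - h2 z') <= B1 * (L2 * d)).
  { apply Rmult_le_compat; auto; apply Rabs_pos. }
  assert (Rabs (h2 z') * Rabs (h1 z - h1 z') <= B2 * (L1 * d)).
  { apply Rmult_le_compat; auto; apply Rabs_pos. }
  lra. Qed.

Lemma nice_swap h : nice h -> nice (fun z => h (snd z, fst z)).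
Proof. intros H K; destruct (H K) as [B [L [? [? G]]]]; exists B, L; split; [lra|split; [lra|]].
  intros z z' [Hz1 Hz2] [Hz1' Hz2'].
  assert (X1 : box K (snd z, fst z)) by (split; simpl; auto).
  assert (X2 : box K (snd z', fst z')) by (split; simpl; auto).
  destruct (G _ _ X1 X2) as [a b]; split; auto. simpl in b; lra. Qed.

Lemma dpl_ext f g x l l' : (forall s, f s = g s) -> l = l' -> derivable_pt_lim f x l -> derivable_pt_lim g x l'.
Proof. intros E <- H eps Heps; destruct (H eps Heps) as [d Hd]; exists d; intros h Hh Hh'; rewrite <- !E; auto. Qed.

Definition C1f (P Pu Pt : pt -> R) := nice P /\ nice Pu /\ nice Pt /\
  forall (al be : R -> R) s a' b', derivable_pt_lim al s a' -> derivable_pt_lim be s b' ->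
    derivable_pt_lim (fun s => P (al s, be s)) s (Pu (al s, be s) * a' + Pt (al s, be s) * b').

Lemma C1f_ext P P' Pu Pt : (forall z, P z = P' z) -> C1f P Pu Pt -> C1f P' Pu Pt.
Proof. intros E [n1 [n2 [n3 D]]]; split; [eapply nice_ext; eauto|split; [auto|split; [auto|]]].
  intros; eapply dpl_ext; [| reflexivity| apply D; eauto]; intros; simpl; auto. Qed.

Lemma C1f_const c : C1f (fun _ => c) (fun _ => 0) (fun _ => 0).
Proof. split; [apply nice_const|split; [apply nice_const|split; [apply nice_const|]]].
  intros; eapply dpl_ext; [ | | apply (derivable_pt_lim_const c s)]; [intros; reflexivity| ring]. Qed.

Lemma C1f_fst : C1f fst (fun _ => 1) (fun _ => 0).
Proof. split; [apply nice_fst|split; [apply nice_const|split; [apply nice_const|]]].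
  intros; eapply dpl_ext; [ | | exact H]; [intros; reflexivity| ring]. Qed.

Lemma C1f_snd : C1f snd (fun _ => 0) (fun _ => 1).
Proof. split; [apply nice_snd|split; [apply nice_const|split; [apply nice_const|]]].
  intros; eapply dpl_ext; [ | | exact H0]; [intros; reflexivity| ring]. Qed.

Lemma C1f_plus P Pu Pt Q Qu Qt : C1f P Pu Pt -> C1f Q Qu Qt ->
  C1f (fun z => P z + Q z) (fun z => Pu z + Qu z) (fun z => Pt z + Qt z).
Proof. intros [a1 [a2 [a3 a4]]] [b1 [b2 [b3 b4]]]; split; [apply nice_plus; auto|split; [apply nice_plus; auto|split; [apply nice_plus; auto|]]].
  intros al be s a' b' Ha Hb; eapply dpl_ext; [ | | apply derivable_pt_lim_plus; [apply (a4 al be s a' b' Ha Hb)|apply (b4 al be s a' b' Ha Hb)]];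
  [intros; reflexivity| ring]. Qed.

Lemma C1f_mult P Pu Pt Q Qu Qt : C1f P Pu Pt -> C1f Q Qu Qt ->
  C1f (fun z => P z * Q z) (fun z => Pu z * Q z + P z * Qu z) (fun z => Pt z * Q z + P z * Qt z).
Proof. intros [a1 [a2 [a3 a4]]] [b1 [b2 [b3 b4]]]; split; [apply nice_mult; auto|split; [apply nice_plus; apply nice_mult; auto|split; [apply nice_plus; apply nice_mult; auto|]]].
  intros al be s a' b' Ha Hb; eapply dpl_ext; [ | | apply derivable_pt_lim_mult; [apply (a4 al be s a' b' Ha Hb)|apply (b4 al be s a' b' Ha Hb)]];
  [intros; reflexivity| cbv beta; ring]. Qed.

Lemma C1f_swap P Pu Pt : C1f P Pu Pt ->
  C1f (fun z => P (snd z, fst z)) (fun z => Pt (snd z, fst z)) (fun z => Pu (snd z, fst z)).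
Proof. intros [a1 [a2 [a3 a4]]]; split; [apply nice_swap; auto|split; [apply nice_swap; auto|split; [apply nice_swap; auto|]]].
  intros al be s a' b' Ha Hb; eapply dpl_ext; [ | | apply (a4 be al s b' a' Hb Ha)]; [intros; reflexivity|simpl; ring]. Qed.

Lemma C1f_eval1 l : exists Pu Pt, C1f (fun z => eval1 l (snd z)) Pu Pt.
Proof. induction l as [|c l [Pu [Pt IH]]].
  - exists (fun _ => 0), (fun _ => 0); apply (C1f_ext (fun _ => 0)); [reflexivity| apply C1f_const].
  - eexists; eexists; eapply C1f_ext; [|apply C1f_plus; [apply (C1f_const c)| apply C1f_mult; [apply C1f_snd| apply IH]]].
    intros; reflexivity. Qed.

Lemma C1f_peval p : exists Pu Pt, C1f (peval p) Pu Pt.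
Proof. induction p as [|r p [Pu [Pt IH]]].
  - exists (fun _ => 0), (fun _ => 0); apply (C1f_ext (fun _ => 0)); [reflexivity| apply C1f_const].
  - destruct (C1f_eval1 r) as [Ru [Rt HR]].
    eexists; eexists; eapply C1f_ext; [|apply C1f_plus; [apply HR| apply C1f_mult; [apply C1f_fst| apply IH]]].
    intros; reflexivity. Qed.

Lemma dpl_loc f g x l : (exists d, 0 < d /\ forall h, Rabs h < d -> f (x + h) = g (x + h)) ->
  derivable_pt_lim f x l -> derivable_pt_lim g x l.
Proof. intros [d [Hd E]] H eps Heps; destruct (H eps Heps) as [d' Hd'].
  assert (Hm : 0 < Rmin d d') by (apply Rmin_pos; [lra| apply cond_pos]).
  exists (mkposreal _ Hm); intros h Hh0 Hh; simpl in Hh.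
  assert (Ex : f x = g x). { replace x with (x + 0) by ring; apply E; rewrite Rabs_R0; lra. }
  rewrite <- Ex, <- E. apply Hd'; auto. eapply Rlt_le_trans; [exact Hh| apply Rmin_r].
  eapply Rlt_le_trans; [exact Hh| apply Rmin_l]. Qed.

Lemma dpl_cont f x l : derivable_pt_lim f x l -> forall eps, 0 < eps ->
  exists d, 0 < d /\ forall y, Rabs (y - x) < d -> Rabs (f y - f x) < eps.
Proof. intros H eps Heps.
  assert (C : continuity_pt f x) by (apply derivable_continuous_pt; exists l; exact H).
  unfold continuity_pt, continue_in, limit1_in, limit_in in C.
  destruct (C eps Heps) as [a [Ha G]]; exists a; split; auto; intros y Hy.
  destruct (Req_dec y x) as [->|Hne].
  - unfold Rminus; rewrite Rplus_opp_r, Rabs_R0; lra.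
  - apply (G y); split; [split; [exact I| auto]| exact Hy]. Qed.

Lemma nice_near h w : nice h -> h (0,w) <> 0 -> exists e, 0 < e /\ e <= 1 /\
  forall u t, Rabs u < e -> Rabs (t - w) < e -> Rabs (h (0,w)) / 2 <= Rabs (h (u,t)).
Proof. intros H H0. destruct (H (Rabs w + 1)) as [B [L [HB [HL G]]]].
  set (q0 := Rabs (h (0,w))). assert (Hq : 0 < q0) by (apply Rabs_pos_lt; auto).
  set (E := q0 / (4*(L+1))). assert (HE : (L+1) * E = q0/4) by (unfold E; field; lra).
  assert (HE0 : 0 < E) by (unfold E; apply Rdiv_lt_0_compat; lra).
  exists (Rmin 1 E). pose proof (Rmin_l 1 E); pose proof (Rmin_r 1 E).
  split. apply Rmin_pos; lra. split. auto.
  intros u t Hu Ht. pose proof (Rabs_pos w).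
  assert (Bz : box (Rabs w + 1) (u,t)).
  { split; simpl. lra. pose proof (Rabs_triang (t-w) w) as T; replace (t - w + w) with t in T by ring; lra. }
  assert (Bw : box (Rabs w + 1) (0,w)). { split; simpl; rewrite ?Rabs_R0; lra. }
  destruct (G _ _ Bz Bw) as [_ Hd]. simpl in Hd. rewrite Rminus_0_r in Hd.
  pose proof (Rabs_pos u); pose proof (Rabs_pos (t - w)).
  assert (L * (Rabs u + Rabs (t - w)) <= q0/2) by nra.
  pose proof (Rabs_triang (h (0,w) - h (u,t)) (h (u,t))) as T.
  replace (h (0,w) - h (u,t) + h (u,t)) with (h (0,w)) in T by ring.
  rewrite Rabs_minus_sym in T. fold q0 in T. lra. Qed.

Definition HrP (g : pt -> R) (w : R) := exists P Pu Pt Q Qu Qt : pt -> R, C1f P Pu Pt /\ C1f Q Qu Qt /\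
  Q (0,w) <> 0 /\ exists e, 0 < e /\ forall u t, Rabs u < e -> Rabs (t - w) < e -> g (u,t) = P (u,t) / Q (u,t).

Definition goodF (g : pt -> R) c1 c2 x y M := forall F : R -> R,
  (forall s, x + s*c1 <> 0 -> F s = g (x + s*c1, (y + s*c2)/(x + s*c1))) ->
  exists l, derivable_pt_lim F 0 l /\ Rabs l <= M.

Lemma dpl_aff x c s0 : derivable_pt_lim (fun s => x + s * c) s0 c.
Proof. eapply dpl_ext; [ | | apply derivable_pt_lim_plus; [apply (derivable_pt_lim_const x)| apply derivable_pt_lim_mult; [apply derivable_pt_lim_id| apply (derivable_pt_lim_const c)]]];
  [intros; reflexivity| unfold id, fct_cte; ring]. Qed.

Lemma patch g w c1 c2 (Hc : forall t, g (0,t) = g (0,0)) (Hr : HrP g w) :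
  exists r M, 0 < r /\ forall x y, x <> 0 -> Rabs x < r -> Rabs (y/x - w) < r -> goodF g c1 c2 x y M.
Proof.
  destruct Hr as [P [Pu [Pt [Q [Qu [Qt [[nP [nPu [nPt dP]]] [[nQ [nQu [nQt dQ]]] [HQ0 [e [He Hg]]]]]]]]]]].
  assert (nN : nice (fun z => Pt z * Q z - P z * Qt z)).
  { eapply nice_ext; [ | apply nice_plus; [apply nice_mult; [exact nPt| exact nQ] | apply nice_opp; apply nice_mult; [exact nP|exact nQt]]].
    intros z; cbv beta; ring. }
  assert (nD : nice (fun z => Pu z * Q z - P z * Qu z)).
  { eapply nice_ext; [ | apply nice_plus; [apply nice_mult; [exact nPu| exact nQ] | apply nice_opp; apply nice_mult; [exact nP|exact nQu]]].
    intros z; cbv beta; ring. }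
  destruct (nice_near Q w nQ HQ0) as [e1 [He1 [He1' HQb]]].
  set (q0 := Rabs (Q (0,w))) in *. assert (Hq0 : 0 < q0) by (apply Rabs_pos_lt; auto).
  set (K := Rabs w + 1). pose proof (Rabs_pos w).
  destruct (nN K) as [BN [LN [HBN [HLN GN]]]]. destruct (nD K) as [BD [LD [HBD [HLD GD]]]].
  set (r := Rmin (e/2) e1). pose proof (Rmin_l (e/2) e1); pose proof (Rmin_r (e/2) e1).
  assert (Hr : 0 < r) by (apply Rmin_pos; lra). fold r in H0, H1.
  assert (N0 : forall t, Rabs (t - w) < r -> Pt (0,t) * Q (0,t) - P (0,t) * Qt (0,t) = 0).
  { intros t Ht.
    assert (Qn : Q (0,t) <> 0).
    { pose proof (HQb 0 t ltac:(rewrite Rabs_R0; lra) ltac:(lra)) as Z. intro Z'; rewrite Z', Rabs_R0 in Z; lra. }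
    assert (Dal : derivable_pt_lim (fun _ => 0) t 0) by apply derivable_pt_lim_const.
    assert (Dbe : derivable_pt_lim (fun s => s) t 1) by apply derivable_pt_lim_id.
    pose proof (dP _ _ t 0 1 Dal Dbe) as DP1. pose proof (dQ _ _ t 0 1 Dal Dbe) as DQ1.
    pose proof (derivable_pt_lim_div _ _ t _ _ DP1 DQ1 Qn) as DD.
    assert (DC : derivable_pt_lim (fun s => P (0, s) / Q (0, s)) t 0).
    { apply dpl_loc with (f := fun _ => g (0,0)); [| apply derivable_pt_lim_const].
      exists (e - Rabs (t - w)); split; [lra|]. intros h Hh. cbv beta. rewrite <- (Hc (t+h)). apply Hg. rewrite Rabs_R0; lra.
      replace (t+h-w) with ((t-w)+h) by ring; eapply Rle_lt_trans; [apply Rabs_triang|lra]. }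
    assert (DD' : derivable_pt_lim (fun s => P (0, s) / Q (0, s)) t
       (((Pu (0,t) * 0 + Pt (0,t) * 1) * Q (0,t) - (Qu (0,t) * 0 + Qt (0,t) * 1) * P (0,t)) / (Q (0,t))²)).
    { eapply dpl_ext; [| | exact DD]; [intros; reflexivity| reflexivity]. }
    pose proof (uniqueness_limite _ _ _ _ DC DD') as U.
    assert (X : Pt (0,t) * Q (0,t) - P (0,t) * Qt (0,t) =
      (((Pu (0,t) * 0 + Pt (0,t) * 1) * Q (0,t) - (Qu (0,t) * 0 + Qt (0,t) * 1) * P (0,t)) / (Q (0,t))²) * (Q (0,t))²)
      by (unfold Rsqr; field; auto).
    rewrite X, <- U; ring. }
  exists r, ((BD * Rabs c1 + LN * (Rabs c2 + Rabs c1 * K)) / (q0/2)²). split; [lra|].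
  intros x y Hx0 Hx Hy F HF.
  set (t0 := y / x) in *.
  assert (Ht0 : Rabs t0 <= K).
  { unfold K; pose proof (Rabs_triang (t0-w) w) as T; replace (t0 - w + w) with t0 in T by ring; lra. }
  assert (Bx : box K (x, t0)) by (split; simpl; [unfold K; lra| exact Ht0]).
  assert (B0 : box K (0, t0)) by (split; simpl; [rewrite Rabs_R0; unfold K; lra| exact Ht0]).
  assert (Qx : q0/2 <= Rabs (Q (x,t0))) by (apply HQb; lra).
  assert (Qxn : Q (x,t0) <> 0) by (intro Z; rewrite Z, Rabs_R0 in Qx; lra).
  assert (Nx : Rabs (Pt (x,t0) * Q (x,t0) - P (x,t0) * Qt (x,t0)) <= LN * Rabs x).
  { destruct (GN _ _ Bx B0) as [_ Hd]. cbv beta in Hd. simpl fst in Hd; simpl snd in Hd.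
    rewrite (N0 t0 Hy), !Rminus_0_r, Rminus_diag, Rabs_R0, Rplus_0_r in Hd. exact Hd. }
  assert (Dx : Rabs (Pu (x,t0) * Q (x,t0) - P (x,t0) * Qu (x,t0)) <= BD) by (apply (GD _ _ Bx Bx)).
  set (al := fun s => x + s * c1). set (be := fun s => (y + s * c2) / (x + s * c1)).
  assert (Dal : derivable_pt_lim al 0 c1) by apply dpl_aff.
  assert (Dbe : derivable_pt_lim be 0 ((c2 * x - c1 * y) / x²)).
  { assert (Z : (fun s => x + s * c1) 0 <> 0) by (cbv beta; rewrite Rmult_0_l, Rplus_0_r; auto).
    pose proof (derivable_pt_lim_div _ _ 0 _ _ (dpl_aff y c2 0) (dpl_aff x c1 0) Z) as HH.
    eapply dpl_ext; [| | exact HH]; [intros; reflexivity| cbv beta; rewrite !Rmult_0_l, !Rplus_0_r; reflexivity]. }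
  assert (al0 : al 0 = x) by (unfold al; ring).
  assert (be0 : be 0 = t0) by (unfold be, t0; rewrite !Rmult_0_l, !Rplus_0_r; reflexivity).
  pose proof (dP al be 0 c1 _ Dal Dbe) as DP. pose proof (dQ al be 0 c1 _ Dal Dbe) as DQ.
  rewrite al0, be0 in DP, DQ.
  assert (Qa : Q (al 0, be 0) <> 0) by (rewrite al0, be0; auto).
  pose proof (derivable_pt_lim_div _ _ 0 _ _ DP DQ Qa) as DG.
  set (b := (c2 * x - c1 * y) / x²) in *.
  exists (((Pu (x,t0) * c1 + Pt (x,t0) * b) * Q (x,t0) - (Qu (x,t0) * c1 + Qt (x,t0) * b) * P (x,t0)) / (Q (x,t0))²).
  split.
  - apply dpl_loc with (f := ((fun s => P (al s, be s)) / (fun s => Q (al s, be s)))%F).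
    + assert (Hm : 0 < Rmin (e/2) (Rabs x)) by (apply Rmin_pos; [lra| apply Rabs_pos_lt; auto]).
      destruct (dpl_cont _ _ _ Dal _ Hm) as [da [Hda Ca]].
      destruct (dpl_cont _ _ _ Dbe (e/2) ltac:(lra)) as [db [Hdb Cb]].
      exists (Rmin da db); split; [apply Rmin_pos; auto|]. intros h Hh. rewrite Rplus_0_l.
      pose proof (Rmin_l da db); pose proof (Rmin_r da db).
      pose proof (Rmin_l (e/2) (Rabs x)); pose proof (Rmin_r (e/2) (Rabs x)).
      assert (A1 : Rabs (al h - x) < Rmin (e/2) (Rabs x)) by (rewrite <- al0 at 1; apply Ca; rewrite Rminus_0_r; lra).
      assert (A2 : Rabs (be h - t0) < e/2) by (rewrite <- be0; apply Cb; rewrite Rminus_0_r; lra).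
      assert (alh : al h <> 0).
      { intro Z; rewrite Z in A1. replace (0 - x) with (- x) in A1 by ring; rewrite Rabs_Ropp in A1; lra. }
      rewrite (HF h alh). symmetry. change (g (al h, be h) = P (al h, be h) / Q (al h, be h)). apply Hg.
      * pose proof (Rabs_triang (al h - x) x) as T; replace (al h - x + x) with (al h) in T by ring; lra.
      * pose proof (Rabs_triang (be h - t0) (t0 - w)) as T; replace (be h - t0 + (t0 - w)) with (be h - w) in T by ring; lra.
    + eapply dpl_ext; [| | exact DG]; [intros; reflexivity| cbv beta; rewrite al0, be0; reflexivity].
  - set (Dv := Pu (x,t0) * Q (x,t0) - P (x,t0) * Qu (x,t0)) in *.
    set (Nv := Pt (x,t0) * Q (x,t0) - P (x,t0) * Qt (x,t0)) in *.
    assert (Eq : ((Pu (x,t0) * c1 + Pt (x,t0) * b) * Q (x,t0) - (Qu (x,t0) * c1 + Qt (x,t0) * b) * P (x,t0)) / (Q (x,t0))²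
       = (Dv * c1 + (Nv / x) * (c2 - c1 * t0)) * / (Q (x,t0))²).
    { unfold Dv, Nv, b, t0, Rsqr; field; auto. }
    rewrite Eq, Rabs_mult.
    assert (Hn : Rabs (Dv * c1 + (Nv / x) * (c2 - c1 * t0)) <= BD * Rabs c1 + LN * (Rabs c2 + Rabs c1 * K)).
    { eapply Rle_trans; [apply Rabs_triang|]. rewrite !Rabs_mult.
      assert (R1 : Rabs Dv * Rabs c1 <= BD * Rabs c1) by (apply Rmult_le_compat_r; [apply Rabs_pos| auto]).
      assert (R2 : Rabs (Nv / x) <= LN).
      { unfold Rdiv; rewrite Rabs_mult, Rabs_inv. pose proof (Rabs_pos_lt x Hx0).
        apply (Rmult_le_reg_r (Rabs x)); auto. rewrite Rmult_assoc, Rinv_l by lra. lra. }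
      assert (R3 : Rabs (c2 - c1 * t0) <= Rabs c2 + Rabs c1 * K).
      { unfold Rminus; eapply Rle_trans; [apply Rabs_triang|]. rewrite Rabs_Ropp, Rabs_mult.
        pose proof (Rabs_pos c1). nra. }
      pose proof (Rabs_pos (Nv / x)); pose proof (Rabs_pos (c2 - c1 * t0)).
      assert (Rabs (Nv / x) * Rabs (c2 - c1 * t0) <= LN * (Rabs c2 + Rabs c1 * K)) by (apply Rmult_le_compat; auto).
      lra. }
    assert (Hq : (q0/2)² <= (Q (x,t0))²).
    { rewrite (Rsqr_abs (Q (x,t0))). unfold Rsqr. pose proof (Rabs_pos (Q (x,t0))). nra. }
    assert (Hq2 : 0 < (q0/2)²) by (unfold Rsqr; nra).
    rewrite Rabs_inv, (Rabs_pos_eq ((Q (x,t0))²)) by apply Rle_0_sqr.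
    unfold Rdiv. apply Rmult_le_compat.
    + apply Rabs_pos.
    + left; apply Rinv_0_lt_compat; lra.
    + exact Hn.
    + apply Rinv_le_contravar; auto.
Qed.

Lemma uniform g c1 c2 (Hc : forall t, g (0,t) = g (0,0)) (Hr : forall w, HrP g w) :
  exists d M, 0 < d /\ forall x y, x <> 0 -> Rabs x < d -> Rabs y <= Rabs x -> goodF g c1 c2 x y M.
Proof.
  assert (Hex : forall w, exists rM : R*R, 0 < fst rM /\ forall x y, x <> 0 -> Rabs x < fst rM ->
     Rabs (y/x - w) < fst rM -> goodF g c1 c2 x y (snd rM)).
  { intros w; destruct (patch g w c1 c2 Hc (Hr w)) as [r [M [Hr0 HH]]]; exists (r,M); simpl; auto. }
  pose (sel := fun w => proj1_sig (constructive_indefinite_description _ (Hex w))).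
  assert (Hsel : forall w, 0 < fst (sel w) /\ forall x y, x <> 0 -> Rabs x < fst (sel w) ->
     Rabs (y/x - w) < fst (sel w) -> goodF g c1 c2 x y (snd (sel w))).
  { intros w; exact (proj2_sig (constructive_indefinite_description _ (Hex w))). }
  assert (Hpos : forall w, 0 < Rmin (fst (sel w)) (/ (Rabs (snd (sel w)) + 1))).
  { intros w; apply Rmin_pos; [apply Hsel| apply Rinv_0_lt_compat; pose proof (Rabs_pos (snd (sel w))); lra]. }
  pose (delta := fun w => mkposreal _ (Hpos w)).
  destruct (compactness_value_1d (-1) 1 delta) as [d Hd].
  exists d, (/ d). split; [apply cond_pos|]. intros x y Hx0 Hx Hy.
  assert (Hxp : 0 < Rabs x) by (apply Rabs_pos_lt; auto).
  assert (Hb : Rabs (y/x) <= 1).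
  { unfold Rdiv; rewrite Rabs_mult, Rabs_inv. apply (Rmult_le_reg_r (Rabs x)); auto.
    rewrite Rmult_assoc, Rinv_l by lra. lra. }
  assert (Hb' : -1 <= y/x <= 1) by (revert Hb; unfold Rabs; destruct Rcase_abs; intros; lra).
  destruct (classic (exists t, -1 <= t <= 1 /\ Rabs (y/x - t) < delta t /\ d <= delta t)) as [[t [Ht [Ht1 Ht2]]]|NE];
    [| exfalso; exact (Hd _ Hb' NE)].
  simpl in Ht1, Ht2. pose proof (Rmin_l (fst (sel t)) (/ (Rabs (snd (sel t)) + 1))).
  pose proof (Rmin_r (fst (sel t)) (/ (Rabs (snd (sel t)) + 1))).
  destruct (Hsel t) as [_ G]. intros F HF.
  destruct (G x y Hx0 ltac:(lra) ltac:(lra) F HF) as [l [Hl Hlb]]. exists l; split; auto.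
  pose proof (cond_pos d). pose proof (Rabs_pos (snd (sel t))).
  assert (Rabs (snd (sel t)) + 1 <= / d).
  { rewrite <- (Rinv_inv (Rabs (snd (sel t)) + 1)). apply Rinv_le_contravar; auto; lra. }
  pose proof (RRle_abs (snd (sel t))). lra.
Qed.

Lemma Hr1 (g : pt -> R) w : regular_at g (0,w) -> HrP g w.
Proof. intros [p [q [U [[ps Hps] [HU Hreg]]]]].
  destruct (proj1 (Hps (0,w)) HU) as [p0 [Hin Hp0]].
  destruct (C1f_peval p0) as [? [? [n0 _]]].
  destruct (nice_near (peval p0) w n0 Hp0) as [e [He [_ Hn]]].
  destruct (C1f_peval p) as [Pu [Pt HP]]; destruct (C1f_peval q) as [Qu [Qt HQ]].
  exists (peval p), Pu, Pt, (peval q), Qu, Qt. split; [auto| split; [auto| split]].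
  - apply (Hreg (0,w) HU).
  - exists e; split; auto. intros u t Hu Ht.
    assert (HUut : U (u,t)).
    { apply Hps. exists p0; split; auto. pose proof (Hn u t Hu Ht). pose proof (Rabs_pos_lt _ Hp0).
      intro Z; rewrite Z, Rabs_R0 in H; lra. }
    apply (Hreg _ HUut).
Qed.

Lemma Hr2 (g : pt -> R) w : regular_at g (w,0) -> HrP (fun z => g (snd z, fst z)) w.
Proof. intros [p [q [U [[ps Hps] [HU Hreg]]]]].
  destruct (proj1 (Hps (w,0)) HU) as [p0 [Hin Hp0]].
  destruct (C1f_peval p0) as [? [? [n0 _]]].
  destruct (nice_near (fun z => peval p0 (snd z, fst z)) w (nice_swap _ n0) Hp0) as [e [He [_ Hn]]].
  destruct (C1f_peval p) as [Pu [Pt HP]]; destruct (C1f_peval q) as [Qu [Qt HQ]].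
  eexists; eexists; eexists; eexists; eexists; eexists.
  split; [apply (C1f_swap _ _ _ HP)| split; [apply (C1f_swap _ _ _ HQ)| split]].
  - apply (Hreg (w,0) HU).
  - exists e; split; auto. intros u t Hu Ht.
    assert (HUut : U (t,u)).
    { apply Hps. exists p0; split; auto. pose proof (Hn u t Hu Ht). pose proof (Rabs_pos_lt _ Hp0).
      intro Z; simpl in H; rewrite Z, Rabs_R0 in H; lra. }
    apply (Hreg _ HUut).
Qed.

Theorem proposition3p6 (f : pt -> R) (v : pt) :
  R0_1 f ->
  forall a : pt, pol f a ->
    exists delta M : R, 0 < delta /\
      forall z : pt, dist2 z a < delta -> dom f z ->
        exists l : R, derivable_pt_lim (line f z v) 0 l /\ Rabs l <= M.
Proof.
  intros [[Hcont Hrat] [S [Hout Hin]]] a Hpol.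
  assert (InaS : In a S).
  { destruct (classic (In a S)) as [|N]; auto. exfalso; apply Hpol.
    destruct (Hout a N) as [p [q [U [HzU [HUa Hreg]]]]].
    exists p, q. split. apply (Hreg a HUa). exists U; split; auto; split; [exists a; auto| auto]. }
  destruct (Hin a InaS) as [H1 H2].
  set (g1 := fun z => f (chart1 a z)). set (g2 := fun z => f (chart2 a (snd z, fst z))).
  assert (Hc1 : forall t, g1 (0,t) = g1 (0,0)) by (intros; unfold g1, chart1; simpl; rewrite !Rmult_0_l; reflexivity).
  assert (Hc2 : forall t, g2 (0,t) = g2 (0,0)) by (intros; unfold g2, chart2; simpl; rewrite !Rmult_0_r; reflexivity).
  destruct (uniform g1 (fst v) (snd v) Hc1 (fun w => Hr1 _ w (H1 w))) as [d1 [M1 [Hd1 U1]]].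
  destruct (uniform g2 (snd v) (fst v) Hc2 (fun w => Hr2 _ w (H2 w))) as [d2 [M2 [Hd2 U2]]].
  exists (Rmin d1 d2), (Rmax M1 M2). split; [apply Rmin_pos; auto|].
  intros z Hz Hdom.
  pose proof (Rmin_l d1 d2); pose proof (Rmin_r d1 d2).
  assert (za : z <> a) by (intro E; subst; contradiction).
  set (x := fst z - fst a). set (y := snd z - snd a).
  assert (Hd : dist2 z a = sqrt (x² + y²)) by (unfold dist2, x, y, Rsqr; f_equal; ring).
  assert (Hxd : Rabs x <= dist2 z a).
  { rewrite Hd, <- sqrt_Rsqr_abs. apply sqrt_le_1_alt. pose proof (Rle_0_sqr y); lra. }
  assert (Hyd : Rabs y <= dist2 z a).
  { rewrite Hd, <- sqrt_Rsqr_abs. apply sqrt_le_1_alt. pose proof (Rle_0_sqr x); lra. }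
  assert (Hz0 : x = 0 -> y = 0 -> False).
  { intros E1 E2; apply za. destruct z as [z1 z2], a as [a1 a2]. unfold x, y in *; simpl in *. f_equal; lra. }
  destruct (Rle_lt_dec (Rabs y) (Rabs x)) as [Hle|Hlt].
  - assert (Hx0 : x <> 0).
    { intro E. apply Hz0; auto. rewrite E, Rabs_R0 in Hle. destruct (Req_dec y 0); auto.
      pose proof (Rabs_pos_lt y H3); lra. }
    destruct (U1 x y Hx0 ltac:(lra) Hle (line f z v)) as [l [Hl Hlb]].
    + intros s Hs. unfold line, g1, chart1; simpl. f_equal; f_equal; [unfold x; ring| unfold y; field; auto].
    + exists l; split; auto; eapply Rle_trans; [exact Hlb| apply Rmax_l].
  - assert (Hy0 : y <> 0).
    { intro E; rewrite E, Rabs_R0 in Hlt; pose proof (Rabs_pos x); lra. }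
    destruct (U2 y x Hy0 ltac:(lra) ltac:(lra) (line f z v)) as [l [Hl Hlb]].
    + intros s Hs. unfold line, g2, chart2; simpl. f_equal; f_equal; [unfold x; field; auto| unfold y; ring].
    + exists l; split; auto; eapply Rle_trans; [exact Hlb| apply Rmax_r].
Qed.
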